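(* Let $q>0$, let $I=(i_1,\dots,i_k)$ be an increasing sequence of integers contained in $\{1,\dots,n\}$ and let $\pi\sim\mu_{n,q}$. Then for any integer $1\le b\le n-i_k$, $\pi_I$ and $\pi_{I+b}$ have the same distribution, i.e. $\mathbb{P}(\pi_I=\omega)=\mathbb{P}(\pi_{I+b}=\omega)$ for every $\omega\in S_k$.
   Context: For $q>0$ and $n\ge1$, $\mu_{n,q}(\pi)=q^{\mathrm{inv}(\pi)}/Z_{n,q}$ on $S_n$, with $\mathrm{inv}(\pi)$ the number of pairs $i<j$ with $\pi(i)>\pi(j)$ and $Z_{n,q}$ a normalizing constant. For an increasing sequence $I=(i_1,\dots,i_k)$, $I+b=(i_1+b,\dots,i_k+b)$, and $\pi_I\in S_k$ denotes the induced relative ordering: $\pi_I(j)>\pi_I(j')$ if and only if $\pi(i_j)>\pi(i_{j'})$. *)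

(* Defs.v *)
From HB Require Import structures.
From mathcomp Require Import all_boot all_order all_algebra all_fingroup.
Set Implicit Arguments. Unset Strict Implicit. Unset Printing Implicit Defensive.
Import Order.TTheory GRing.Theory Num.Theory.

(* Permutations of {1..n} are represented by 'S_n (0-based: position i <-> 'I_n element i-1). *)

Definition inv {n : nat} (pi : 'S_n) : nat :=
  #|[set p : 'I_n * 'I_n | (p.1 < p.2)%N && (pi p.2 < pi p.1)%N]|.

Local Open Scope ring_scope.

Definition Zmal {R : realFieldType} (n : nat) (q : R) : R :=
  \sum_(pi : 'S_n) q ^+ inv pi.

Definition mallows {R : realFieldType} (n : nat) (q : R) (pi : 'S_n) : R :=
  q ^+ inv pi / Zmal n q.

(* value pi(i) for a 1-based position i (0-based value; 0 if i out of range) *)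
Definition pval {n : nat} (pi : 'S_n) (i : nat) : nat :=
  if insub (i.-1) is Some x then val (pi x) else 0%N.

(* pi_I = omega, for I = (i_1,...,i_k) (1-based positions, given as a seq of size k):
   omega(j) > omega(j') iff pi(i_j) > pi(i_j'). *)
Definition pattern_is {n k : nat} (pi : 'S_n) (I : seq nat) (omega : 'S_k) : bool :=
  [forall j : 'I_k, forall j' : 'I_k,
     (omega j' < omega j)%N == (pval pi (nth 0%N I j') < pval pi (nth 0%N I j))%N].

Definition prob_pattern {R : realFieldType} (n k : nat) (q : R) (I : seq nat) (omega : 'S_k) : R :=
  \sum_(pi : 'S_n | pattern_is pi I omega) @mallows R n q pi.

(* Main.v *)
Require Import Defs.
From mathcomp Require Import all_boot all_order all_algebra all_fingroup.
From mathcomp Require Import zify.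
Import Order.TTheory GRing.Theory Num.Theory.

Notation minv := Defs.inv.

Lemma g_lt w v u1 u2 : u1 != v -> u2 != v ->
  (bump w (unbump v u1) < bump w (unbump v u2)) = (u1 < u2).
Proof.
move=> /eqP h1 /eqP h2; rewrite /bump /unbump.
case: (ltnP v u1) => a; case: (ltnP v u2) => b /=;
rewrite ?subn1 ?subn0;
case: (leqP w _) => c; case: (leqP w _) => d /=; apply/idP/idP; lia.
Qed.

Lemma g_bound m w v u : w <= m -> v <= m -> u <= m -> u != v -> bump w (unbump v u) <= m.
Proof.
move=> hw hv hu /eqP h1; rewrite /bump /unbump.
case: (ltnP v u) => a /=; rewrite ?subn1 ?subn0; case: (leqP w _) => c /=; lia.
Qed.

Lemma inv_sum n (p : 'S_n) :
  minv p = \sum_(i : 'I_n) \sum_(j : 'I_n) ((i < j) && (p j < p i)).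
Proof.
rewrite /minv /Defs.inv -sum1_card pair_big /= big_mkcond; apply: eq_bigr => x _.
by rewrite inE; case: (_ && _).
Qed.

Lemma inv_last m (p : 'S_m.+1) : minv p =
  \sum_(i < m) \sum_(j < m) ((i < j) && (p (widen_ord (leqnSn m) j) < p (widen_ord (leqnSn m) i)))
  + \sum_(i < m) (p ord_max < p (widen_ord (leqnSn m) i)).
Proof.
rewrite inv_sum big_ord_recr /= [X in _ + X = _]big1; last first.
  move=> j _ /=; have -> : (@ord_max m < j)%N = false.
    by apply/negbTE; rewrite -leqNgt; exact: ltn_ord j.
  by [].
rewrite addn0 -big_split /=; apply: eq_bigr => i _.
by rewrite big_ord_recr /= ltn_ord.
Qed.

Lemma inv_first m (p : 'S_m.+1) : minv p =
  \sum_(i < m) \sum_(j < m) ((i < j) && (p (lift ord0 j) < p (lift ord0 i)))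
  + \sum_(j < m) (p (lift ord0 j) < p ord0).
Proof.
rewrite inv_sum big_ord_recl /= addnC; congr (_ + _).
  by apply: eq_bigr => i _; rewrite big_ord_recl /=.
by rewrite big_ord_recl /=.
Qed.

Lemma sum_gt a N : \sum_(i < N) (a < i) = N - a.+1.
Proof.
elim: N => [|N IH]; first by rewrite big_ord0.
rewrite big_ord_recr /= IH; case: (ltnP a N) => h /=; lia.
Qed.

Lemma sum_lt a N : \sum_(i < N) (i < a) = minn a N.
Proof.
elim: N => [|N IH]; first by rewrite big_ord0 minn0.
rewrite big_ord_recr /= IH; case: (ltnP N a) => h /=; lia.
Qed.

Lemma sum_perm {n} (p : 'S_n) (F : nat -> nat) :
  \sum_(i : 'I_n) F (p i) = \sum_(i : 'I_n) F i.
Proof. by rewrite [RHS](reindex_inj (@perm_inj _ p)). Qed.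

Definition shf {m} (p : 'S_m.+1) (y : 'I_m.+1) : 'I_m.+1 :=
  if y == ord0 then inord (m - p ord_max)
  else inord (bump (m - p ord_max) (unbump (p ord_max) (p (inord y.-1)))).

Lemma pred_neq_max m (y : 'I_m.+1) : y != ord0 -> (inord y.-1 : 'I_m.+1) != ord_max.
Proof.
move=> hy; apply/eqP => /(congr1 val); rewrite /= inordK.
  have := ltn_ord y; move: hy; rewrite -val_eqE /=; lia.
have := ltn_ord y; lia.
Qed.

Lemma shf_val m (p : 'S_m.+1) (y : 'I_m.+1) : y != ord0 ->
  val (shf p y) = bump (m - p ord_max) (unbump (p ord_max) (p (inord y.-1))).
Proof.
move=> hy; rewrite /shf (negbTE hy) /= inordK // ltnS; apply: g_bound.
- lia.
- by rewrite -ltnS.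
- by rewrite -ltnS.
- by rewrite val_eqE (inj_eq perm_inj) pred_neq_max.
Qed.

Lemma shf0 m (p : 'S_m.+1) : val (shf p ord0) = m - p ord_max.
Proof. by rewrite /shf eqxx /= inordK // ltnS leq_subr. Qed.

Lemma shf_inj m (p : 'S_m.+1) : injective (shf p).
Proof.
have key : forall y : 'I_m.+1, y != ord0 -> p (inord y.-1) != p ord_max.
  by move=> y hy; rewrite (inj_eq perm_inj) pred_neq_max.
move=> y1 y2 /(congr1 val) E.
case: (eqVneq y1 ord0) => h1; case: (eqVneq y2 ord0) => h2.
- by rewrite h1 h2.
- by move: E; rewrite h1 shf0 shf_val // => E; have := neq_bump (m - p ord_max) (unbump (p ord_max) (p (inord y2.-1))); rewrite {1}E eqxx.
- by move: E; rewrite h2 shf0 shf_val // => E; have := neq_bump (m - p ord_max) (unbump (p ord_max) (p (inord y1.-1))); rewrite -{1}E eqxx.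
move: E; rewrite !shf_val // => /(can_inj (bumpK _)) E.
have E2 : val (p (inord y1.-1)) = val (p (inord y2.-1)).
  by rewrite -(unbumpK (key _ h1)) -(unbumpK (key _ h2)) /= E.
move/val_inj/perm_inj/(congr1 (@nat_of_ord _)): E2; rewrite !inordK; last 2 first.
- by have := ltn_ord y2; lia.
- by have := ltn_ord y1; lia.
move: h1 h2; rewrite -!val_eqE /= => h1 h2 E3; apply: ord_inj; lia.
Qed.

Definition phi {m} (p : 'S_m.+1) : 'S_m.+1 := perm (@shf_inj m p).

Lemma phi_inj m : injective (@phi m).
Proof.
move=> p1 p2 E.
have hv : p1 ord_max = p2 ord_max.
  have := congr1 (fun s : 'S_m.+1 => nat_of_ord (s ord0)) E; rewrite /= !permE !shf0 => h.
  apply: ord_inj; have := ltn_ord (p1 ord_max); have := ltn_ord (p2 ord_max); lia.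
apply/permP => x.
case: (eqVneq x ord_max) => hx; first by rewrite hx.
have hxm : x < m by have := ltn_ord x; move: hx; rewrite -val_eqE /=; lia.
pose y : 'I_m.+1 := inord x.+1.
have hy : y != ord0 by rewrite -val_eqE /= inordK.
have hyx : (inord (nat_of_ord y).-1 : 'I_m.+1) = x.
  by rewrite /y inordK //= inord_val.
have n1 : val (p1 x) != val (p2 ord_max).
  by rewrite -hv val_eqE (inj_eq perm_inj).
have n2 : val (p2 x) != val (p2 ord_max).
  by rewrite val_eqE (inj_eq perm_inj).
have := congr1 (fun s : 'S_m.+1 => nat_of_ord (s y)) E; rewrite /= !permE !shf_val // hyx hv.
move=> /(can_inj (bumpK _)) h; apply: ord_inj.
by rewrite -(unbumpK n1) -(unbumpK n2) /= h.
Qed.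

Lemma lift_pred m (j : 'I_m) :
  (inord (nat_of_ord (lift ord0 j : 'I_m.+1)).-1 : 'I_m.+1) = widen_ord (leqnSn m) j.
Proof. by apply: val_inj; rewrite lift0 /= inordK // ltnW // ltnS ltn_ord. Qed.

Lemma inv_phi m (p : 'S_m.+1) : minv (phi p) = minv p.
Proof.
rewrite inv_first inv_last; congr (_ + _).
  apply: eq_bigr => i _; apply: eq_bigr => j _.
  rewrite !permE !shf_val ?lift_pred; try by rewrite eq_sym neq_lift.
  rewrite g_lt // val_eqE (inj_eq perm_inj) -val_eqE /= neq_ltn ltn_ord //.
have A : \sum_(j < m.+1) (phi p j < phi p ord0) = m - p ord_max.
  have := sum_perm (phi p) (fun x => x < val (phi p ord0)) => /= ->.
  rewrite sum_lt permE shf0; apply/minn_idPl; lia.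
have B : \sum_(i < m.+1) (p ord_max < p i) = m - p ord_max.
  have := sum_perm p (fun x => val (p ord_max) < x) => /= ->.
  rewrite sum_gt; lia.
move: A B; rewrite big_ord_recl big_ord_recr /= !ltnn add0n addn0 => -> ->.
by [].
Qed.

Lemma pval_E {m} (p : 'S_m.+1) (i : nat) : 0 < i <= m.+1 -> Defs.pval p i = nat_of_ord (p (inord i.-1)).
Proof.
move=> /andP[h1 h2]; rewrite /Defs.pval; case: insubP => [u _ hu | hn].
  by congr (nat_of_ord (p _)); apply: ord_inj; rewrite inordK; [exact: hu | lia].
exfalso; move: hn; rewrite -leqNgt; lia.
Qed.

Lemma pat_phi m k (p : 'S_m.+1) I (omega : 'S_k) : size I = k ->
  all (fun i => 0 < i <= m) I ->
  pattern_is (phi p) (map (addn 1) I) omega = pattern_is p I omega.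
Proof.
move=> hs /allP ha; rewrite /pattern_is; apply: eq_forallb => j; apply: eq_forallb => j'.
have hv : forall t : 'I_k, Defs.pval (phi p) (nth 0 (map (addn 1) I) t)
   = bump (m - p ord_max) (unbump (p ord_max) (Defs.pval p (nth 0 I t)))
   /\ Defs.pval p (nth 0 I t) != p ord_max.
  move=> t; have ht : t < size I by rewrite hs.
  have := ha _ (mem_nth 0 ht) => /andP [h1 h2].
  rewrite (nth_map 0) //; move: h1 h2; set i := nth 0 I t => h1 h2.
  rewrite add1n !pval_E; try lia.
  have hy : (inord i : 'I_m.+1) != ord0.
    by rewrite -val_eqE /= inordK; lia.
  rewrite /= permE shf_val // inordK; last by lia.
  split; first by [].
  rewrite val_eqE (inj_eq perm_inj) -val_eqE /= inordK; lia.
case: (hv j) => [-> n1]; case: (hv j') => [-> n2].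
by rewrite g_lt.
Qed.

Lemma step (R : realFieldType) (q : R) n k I (omega : 'S_k) : size I = k ->
  all (fun i => 0 < i < n) I ->
  @prob_pattern R n k q I omega = @prob_pattern R n k q (map (addn 1) I) omega.
Proof.
case: n => [|m] hs ha.
  by case: I hs ha => [|i I'] //= _ /andP[/andP[_]]; rewrite ltn0.
rewrite /prob_pattern [RHS](reindex_inj (@phi_inj m)); apply: eq_big => p.
  rewrite pat_phi //; apply/allP => x /(allP ha); by rewrite ltnS.
by move=> _; rewrite /mallows inv_phi.
Qed.

Lemma path_le_last x s : path ltn x s -> forall i, i \in x :: s -> i <= last x s.
Proof.
elim: s x => [|y s IH] x /=.
  by move=> _ i; rewrite inE => /eqP ->.
move=> /andP [hxy hp] i; rewrite inE => /orP [/eqP -> | hi].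
  have := IH y hp y (mem_head _ _); lia.
exact: IH y hp i hi.
Qed.

Lemma le_last (s : seq nat) : sorted ltn s -> forall i, i \in s -> i <= last 0 s.
Proof. case: s => [|x s] //= hp i hi; exact: path_le_last hp i hi. Qed.

Lemma last_mem (s : seq nat) i : i \in s -> last 0 s \in s.
Proof. case: s => [|x s'] //= _; exact: mem_last. Qed.

Local Open Scope ring_scope.

Theorem lemma2p6 (R : realFieldType) (q : R) (hq : 0 < q) (n k : nat)
  (I : seq nat) (hsize : size I = k) (hsorted : sorted ltn I)
  (hrange : all (fun i => (0 < i <= n)%N) I)
  (b : nat) (hb1 : (1 <= b)%N) (hb2 : (b <= n - last 0%N I)%N)
  (omega : 'S_k) :
  @prob_pattern R n k q I omega = @prob_pattern R n k q (map (addn b) I) omega.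
Proof.
have key : forall b' J, size J = k -> all (fun i => (0 < i)%N && (i + b' <= n)%N) J ->
    @prob_pattern R n k q J omega = @prob_pattern R n k q (map (addn b') J) omega.
  elim => [|b' IH] J hs hJ.
    by rewrite (eq_map add0n) map_id.
  rewrite IH //; last first.
    by apply/allP => x /(allP hJ) /andP[h1 h2]; rewrite h1 /=; lia.
  rewrite (@step R q n k (map (addn b') J) omega); last 2 first.
  - by rewrite size_map.
  - by rewrite all_map; apply/allP => x /(allP hJ) /andP[h1 h2] /=; lia.
  by rewrite -map_comp; congr (@prob_pattern R n k q _ omega); apply: eq_map => x /=; lia.
apply: key => //.
apply/allP => i hi.
have /andP[h1 h2] := allP hrange i hi; rewrite h1 /=.
have hl := @le_last I hsorted i hi.
have /andP[_ hln] := allP hrange _ (@last_mem I i hi).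
lia.
Qed.
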